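(* In Smoluchowski's discrete model (defined in the context), for every $t\ge0$, every $S\subset[N]$ with $\mathbb{P}(S(t)=S)>0$ and every graph $G$ on vertex set $S$, \[ \mathbb{P}(C(t)=G\mid S(t)=S)=\mathbb{P}\big(ER_S(p^{(N)}_t)=G\ \big|\ ER_S(p^{(N)}_t)\text{ has no component of size}\ge\alpha(N)\big), \] i.e. conditionally on $S(t)$, the configuration on $S(t)$ is an Erdős–Rényi graph on $S(t)$ with edge probability $p^{(N)}_t$ conditioned on having no connected component with at least $\alpha(N)$ vertices.
   Context: Smoluchowski's discrete model: $N\ge2$, $(\alpha(N))$ with $\alpha(N)\to\infty$, $\alpha(N)/N\to0$. Particles $[N]$; each unordered pair $\{i,j\}$ has an independent exponential clock $e_{ij}$ of parameter $1/N$; initially no links. When $e_{ij}$ rings, the link is created unless $i$ or $j$ belongs at that moment to a cluster (connected component of created links) of size $\ge\alpha(N)$, in which case it is never created. $S(t)$ is the set of particles in clusters of size $<\alpha(N)$ at time $t$; $C(t)$ is the graph on $S(t)$ with edges $\{i,j\}\subset S(t)$, $e_{ij}\le t$. $p^{(N)}_t=1-e^{-t/N}$. $ER_S(p)$ is the random graph on vertex set $S$ where each edge is present independently with probability $p$. *)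

(* Defs.v *)
From HB Require Import structures.
From mathcomp Require Import all_boot all_order all_algebra.
From mathcomp Require Import all_classical all_reals all_analysis.
From mathcomp Require Import exponential_distribution.
Set Implicit Arguments. Unset Strict Implicit. Unset Printing Implicit Defensive.
Import Order.TTheory GRing.Theory Num.Theory.
Local Open Scope ring_scope.

Section Smoluchowski.
Variable R : realType.
Variable N : nat.

(* A graph on (a subset of) [N] is given by its edge set: a set of 2-subsets. *)
Definition adj (G : {set {set 'I_N}}) : rel 'I_N := fun x y => [set x; y] \in G.
Definition cluster (G : {set {set 'I_N}}) (x : 'I_N) : {set 'I_N} :=
  [set y | connect (adj G) x y].

Definition graph_on (S : {set 'I_N}) (G : {set {set 'I_N}}) : bool :=
  [forall E in G, (#|E| == 2) && (E \subset S)].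

Definition no_big_comp (a : R) (S : {set 'I_N}) (G : {set {set 'I_N}}) : bool :=
  [forall x in S, #|cluster G x|%:R < a].

(* unordered pairs {i,j}, encoded as (i,j) with i < j *)
Definition pairs : seq ('I_N * 'I_N) :=
  [seq p <- [seq (i, j) | i <- enum 'I_N, j <- enum 'I_N] | (val p.1 < val p.2)%N].

Definition clocks := 'I_N * 'I_N -> R.

(* Deterministic evolution: the clocks that ring in [0,t], in increasing
   order of ringing time (ties have probability 0; they are broken by sort). *)
Definition rung (e : clocks) (t : R) : seq ('I_N * 'I_N) :=
  sort (fun p q => e p <= e q) [seq p <- pairs | e p <= t].

Definition step (a : R) (G : {set {set 'I_N}}) (p : 'I_N * 'I_N) :=
  if (#|cluster G p.1|%:R < a) && (#|cluster G p.2|%:R < a)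
  then [set p.1; p.2] |: G else G.

Definition links (a : R) (e : clocks) (t : R) : {set {set 'I_N}} :=
  foldl (step a) finset.set0 (rung e t).

Definition St (a : R) (e : clocks) (t : R) : {set 'I_N} :=
  [set x | #|cluster (links a e t) x|%:R < a].

Definition Ct (a : R) (e : clocks) (t : R) : {set {set 'I_N}} :=
  [set E : {set 'I_N} | [exists i : 'I_N, exists j : 'I_N,
     [&& (i < j)%N, E == [set i; j], i \in St a e t, j \in St a e t & e (i, j) <= t]]].

Definition upd (x : clocks) (p : 'I_N * 'I_N) (y : R) : clocks :=
  fun q => if q == p then y else x q.

(* iterated integral over the independent clocks, each exponential with
   the given rate (density w.r.t. Lebesgue measure) *)
Fixpoint iint (rate : R) (l : seq ('I_N * 'I_N)) (f : clocks -> \bar R)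
  (x : clocks) : \bar R :=
  match l with
  | [::] => f x
  | p :: l' => (\int[lebesgue_measure]_y
                 ((exponential_pdf rate y)%:E * iint rate l' f (upd x p y)))%E
  end.

Definition Pr (E : clocks -> bool) : \bar R :=
  iint (N%:R^-1) pairs (fun e => (E e)%:R%:E) (fun _ => 0).

Definition ER (S : {set 'I_N}) (p : R) (A : {set {set 'I_N}} -> bool) : R :=
  \sum_(H : {set {set 'I_N}} | graph_on S H && A H)
     p ^+ #|H| * (1 - p) ^+ ('C(#|S|, 2) - #|H|).

End Smoluchowski.

Definition pN {R : realType} (N : nat) (t : R) : R := 1 - expR (- (t / N%:R)).

(* Main.v *)
From Pilot Require Import Defs.
From HB Require Import structures.
From mathcomp Require Import all_boot all_order all_algebra.
From mathcomp Require Import all_classical all_reals all_analysis.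
From mathcomp Require Import exponential_distribution measurable_realfun.
From mathcomp Require Import zify.
Import Order.TTheory GRing.Theory Num.Theory.
Import numFieldNormedType.Exports.
Local Open Scope classical_set_scope.
Local Open Scope ring_scope.

Module m1.
Set SsrOldRewriteGoalsOrder.
Set Implicit Arguments. Unset Strict Implicit. Unset Printing Implicit Defensive.
Local Open Scope classical_set_scope.
Local Open Scope ring_scope.
Import HBNNSimple.
Section NM.
Context (R : realType).
Local Notation mu := (@lebesgue_measure R).
Local Open Scope ereal_scope.

Lemma integralZl_nm (f : R -> \bar R) (k : R) : (0 <= k)%R -> (forall x, 0 <= f x) ->
  \int[mu]_x (k%:E * f x) = k%:E * \int[mu]_x f x.
Proof.
move=> k0 f0; have [->|kgt0] := eqVneq k 0%R.
  by rewrite mul0e; under eq_integral do rewrite mul0e; rewrite integral0.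
have k0' : (0 < k)%R by rewrite lt_def kgt0.
rewrite ge0_integralTE; last by move=> x; rewrite mule_ge0.
rewrite ge0_integralTE // -ereal_supZl //; last first.
  apply/set0P; exists 0; exists nnsfun0 => //=; exact: sintegral0.
congr ereal_sup; apply/seteqP; split => z /=.
- move=> [h hle <-].
  have ki0 : (0 <= k^-1)%R by rewrite invr_ge0.
  exists (sintegral mu (scale_nnsfun h ki0)).
    exists (scale_nnsfun h ki0) => //= x.
    rewrite EFinM -(@lee_pmul2l _ k%:E) ?lte_fin // muleA -EFinM mulrV ?unitfE //.
    by rewrite mul1r.
  rewrite -(sintegralrM mu k (scale_nnsfun h ki0)); apply: eq_sintegral => x /=.
  by rewrite mulrA mulrV ?unitfE // mul1r.
- move=> [_ [h hle <-] <-].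
  exists (scale_nnsfun h (ltW k0')) => /=.
    by move=> x; rewrite EFinM; apply: lee_wpmul2l => //; rewrite lee_fin ltW.
  by rewrite -sintegralrM.
Qed.

End NM.

End m1.

Module m2.
Set SsrOldRewriteGoalsOrder.
Set Implicit Arguments. Unset Strict Implicit. Unset Printing Implicit Defensive.
Local Open Scope classical_set_scope.
Local Open Scope ring_scope.
Section OneD.
Context (R : realType) (rate t : R).
Hypothesis rate_gt0 : 0 < rate.
Hypothesis ht : 0 <= t.
Local Notation mu := (@lebesgue_measure R).
Local Notation pdf := (exponential_pdf rate).
Let q := 1 - expR (- (t * rate)).

Let mpdf : measurable_fun [set: R] (fun x : R => ((pdf x)%:E : \bar R)).
Proof. by apply/measurable_EFinP; exact: measurable_exponential_pdf. Qed.
Let pdf0 x : (0 <= (pdf x)%:E)%E.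
Proof. by rewrite lee_fin exponential_pdf_ge0 // ltW. Qed.

Lemma int_pdf_le : (\int[mu]_(x in `]-oo, t]) (pdf x)%:E = q%:E)%E.
Proof.
have -> : `]-oo, t]%classic = `]-oo, 0[%classic `|` `[0, t]%classic :> set R.
  apply/seteqP; split => x /=; rewrite !in_itv /=.
    by move=> xt; case: (ltP x 0) => x0; [left|right]; rewrite ?x0 ?xt.
  by case=> [/ltW x0|/andP[_ ->]] //; apply: le_trans ht.
rewrite ge0_integral_setU //=; last 2 first.
- exact: (measurable_funS measurableT (@subsetT _ _) mpdf).
- apply/disj_setPS => x [] /=; rewrite !in_itv /= => x0 /andP[x0' _].
  by move: (lt_le_trans x0 x0'); rewrite ltxx.
rewrite integral0_eq ?add0e; last first.
  by move=> x /=; rewrite in_itv /= => x0; rewrite lt0_exponential_pdf.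
have [t0|tgt0] := eqVneq t 0.
  rewrite /q t0 mul0r oppr0 expR0 subrr (integral_Sset1 0%R) //.
  move=> x /=; rewrite in_itv /= => /andP[x0 x0'].
  by apply/eqP; rewrite eq_le x0 x0'.
have t0 : 0 < t by rewrite lt_def tgt0.
have := exponential_prob_itv0c rate t0; rewrite /exponential_prob => ->.
by rewrite /q mulNr mulrC EFinB.
Qed.

Lemma int_pdf_gt : (\int[mu]_(x in ~` `]-oo, t]) (pdf x)%:E = (1 - q)%:E)%E.
Proof.
have := integral_exponential_pdf rate_gt0.
rewrite -(setUv `]-oo, t]%classic) ge0_integral_setU //=; last 3 first.
- exact: measurableC.
- exact: (measurable_funS measurableT (@subsetT _ _) mpdf).
- exact/disj_setPCl.
rewrite int_pdf_le => h.
have : (\int[mu]_(x in ~` `]-oo, t]) (pdf x)%:E)%E \is a fin_num.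
  rewrite ge0_fin_numE; last by apply: integral_ge0 => x _; exact: pdf0.
  apply: (le_lt_trans _ (ltry 1%R)); rewrite -h; apply: leeDr.
  by rewrite lee_fin subr_ge0 expR_le1 oppr_le0 mulr_ge0 // ltW.
move=> /fineK hf; rewrite -hf in h *; congr EFin.
by move: h; rewrite -EFinD => -[<-]; rewrite addrC addKr.
Qed.

Lemma one_step (W1 W0 : R) : 0 <= W1 -> 0 <= W0 ->
  (\int[mu]_y ((pdf y)%:E * (if y <= t then W1 else W0)%:E) = (q * W1 + (1 - q) * W0)%:E)%E.
Proof.
move=> W10 W00.
have mf : measurable_fun setT (fun y => ((pdf y)%:E * (if y <= t then W1 else W0)%:E)%E).
  apply/measurable_EFinP => /=; apply: measurable_funM.
    exact: measurable_exponential_pdf.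
  apply: measurable_fun_ifT => //; apply: measurable_fun_ler => //.
rewrite -(setUv `]-oo, t]%classic) ge0_integral_setU //=; last 4 first.
- exact: measurableC.
- by rewrite setUv.
- by move=> x _; apply: mule_ge0; [exact: pdf0| case: ifP].
- exact/disj_setPCl.
have -> : (\int[mu]_(x in `]-oo, t]) ((pdf x)%:E * (if x <= t then W1 else W0)%:E) = W1%:E * q%:E)%E.
  transitivity (\int[mu]_(x in `]-oo, t]) (W1%:E * (pdf x)%:E))%E.
    by apply: eq_integral => x; rewrite inE /= in_itv /= => ->; rewrite muleC.
  rewrite ge0_integralZl_EFin //; try (by rewrite int_pdf_le);
    try (by move=> x _; exact: pdf0); try exact: (measurable_funS measurableT (@subsetT _ _) mpdf).
have -> : (\int[mu]_(x in ~` `]-oo, t]) ((pdf x)%:E * (if x <= t then W1 else W0)%:E) = W0%:E * (1 - q)%:E)%E.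
  transitivity (\int[mu]_(x in ~` `]-oo, t]) (W0%:E * (pdf x)%:E))%E.
    by apply: eq_integral => x; rewrite inE /= in_itv /= => /negP/negbTE ->; rewrite muleC.
  rewrite ge0_integralZl_EFin //; try (by rewrite int_pdf_gt);
    try (by move=> x _; exact: pdf0); try exact: (measurable_funS measurableT (@subsetT _ _) mpdf);
    try exact: measurableC.
by rewrite -!EFinM -EFinD mulrC [X in _ + X]mulrC.
Qed.

End OneD.

End m2.

Module m3.
Set SsrOldRewriteGoalsOrder.
Set Implicit Arguments. Unset Strict Implicit. Unset Printing Implicit Defensive.
Local Open Scope classical_set_scope.
Local Open Scope ring_scope.
Import m1 m2.
Import HBNNSimple.

Lemma le_integral_nm (R : realType) (f g : R -> \bar R) :
  (forall x, (0 <= f x)%E) -> (forall x, (f x <= g x)%E) ->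
  (\int[@lebesgue_measure R]_x f x <= \int[@lebesgue_measure R]_x g x)%E.
Proof.
move=> f0 fg.
have g0 : forall x, (0 <= g x)%E by move=> x; exact: le_trans (f0 x) (fg x).
rewrite ge0_integralTE // ge0_integralTE //; apply: ereal_sup_le.
move=> z /= [h hf <-]; exists h => // x; exact: le_trans (hf x) (fg x).
Qed.

Section Fact.
Context (R : realType) (N : nat) (rate t : R) (S : {set 'I_N}).
Hypothesis rate_gt0 : 0 < rate.
Hypothesis ht : 0 <= t.
Local Notation mu := (@lebesgue_measure R).
Local Notation pdf := (exponential_pdf rate).
Local Notation q := (1 - expR (- (t * rate))).
Local Notation P := ('I_N * 'I_N)%type.

Definition internal (p : P) := (p.1 \in S) && (p.2 \in S).
Definition thr (e : clocks R N) : P -> bool := fun p => e p <= t.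
Definition setb (th : P -> bool) (p : P) (b : bool) : P -> bool :=
  fun r => if r == p then b else th r.

Fixpoint Wt (l : seq P) (Phi : (P -> bool) -> bool) (th : P -> bool) : R :=
  match l with
  | [::] => (Phi th)%:R
  | p :: l' => q * Wt l' Phi (setb th p true) + (1 - q) * Wt l' Phi (setb th p false)
  end.

Lemma q_ge0 : 0 <= q.
Proof. by rewrite subr_ge0 expR_le1 oppr_le0 mulr_ge0 // ltW. Qed.
Lemma q_le1 : q <= 1.
Proof. by rewrite lerBlDr lerDl expR_ge0. Qed.

Lemma Wt_ge0 l Phi th : 0 <= Wt l Phi th.
Proof.
elim: l th => [|p l IH] th /=; first by case: (Phi th).
by rewrite addr_ge0 // mulr_ge0 // ?q_ge0 // subr_ge0 q_le1.
Qed.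

Lemma setbC th p r b c : r != p -> setb (setb th p b) r c = setb (setb th r c) p b.
Proof.
move=> rp; apply/funext => s; rewrite /setb.
have [->|sr] := eqVneq s r.
  by case: (r == p) rp.
by [].
Qed.

Lemma setbK th p b c : setb (setb th p b) p c = setb th p c.
Proof. by apply/funext => s; rewrite /setb; case: (s == p). Qed.

Lemma Wt_setb l Phi p th b : (forall th' b', Phi (setb th' p b') = Phi th') ->
  Wt l Phi (setb th p b) = Wt l Phi th.
Proof.
move=> HP; elim: l th => [|r l IH] th /=; first by rewrite HP.
case: (eqVneq r p) => [->|rp]; first by rewrite !setbK.
by rewrite (@setbC th p r b true rp) (@setbC th p r b false rp) !IH.
Qed.

Lemma thr_upd x p y : thr (upd x p y) = setb (thr x) p (y <= t).
Proof. by apply/funext => s; rewrite /thr /upd /setb; case: (s == p). Qed.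

Lemma updC (x : clocks R N) p r y z : r != p -> upd (upd x p y) r z = upd (upd x r z) p y.
Proof.
move=> rp; apply/funext => s; rewrite /upd.
have [->|sr] := eqVneq s r.
  by case: (r == p) rp.
by [].
Qed.

Lemma updK (x : clocks R N) p y z : upd (upd x p y) p z = upd x p z.
Proof. by apply/funext => s; rewrite /upd; case: (s == p). Qed.

Lemma iint_upd (l : seq P) (F : clocks R N -> \bar R) p (x : clocks R N) y : (forall e z, F (upd e p z) = F e) ->
  iint rate l F (upd x p y) = iint rate l F x.
Proof.
move=> HF; elim: l x => [|r l IH] x /=; first exact: HF.
case: (eqVneq r p) => [->|rp].
  by congr (integral _ _ _); apply/funext => z; rewrite updK.
by congr (integral _ _ _); apply/funext => z; rewrite (@updC x p r y z rp) IH.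
Qed.

Lemma iint_ge0 (l : seq P) (F : clocks R N -> \bar R) (x : clocks R N) : (forall e, (0 <= F e)%E) -> (0 <= iint rate l F x)%E.
Proof.
move=> F0; elim: l x => [|r l IH] x /=; first exact: F0.
apply: integral_ge0 => y _; apply: mule_ge0 => //.
by rewrite lee_fin exponential_pdf_ge0 // ltW.
Qed.

Lemma iint_le1 (l : seq P) (F : clocks R N -> \bar R) (x : clocks R N) : (forall e, (0 <= F e)%E) -> (forall e, (F e <= 1)%E) ->
  (iint rate l F x <= 1)%E.
Proof.
move=> F0 F1; elim: l x => [|r l IH] x /=; first exact: F1.
rewrite -(integral_exponential_pdf rate_gt0).
apply: le_integral_nm => y.
  by apply: mule_ge0; [rewrite lee_fin exponential_pdf_ge0 // ltW|exact: iint_ge0].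
rewrite -[X in (_ <= X)%E]mule1; apply: lee_wpmul2l; last exact: IH.
by rewrite lee_fin exponential_pdf_ge0 // ltW.
Qed.

Lemma iint_fin (l : seq P) (F : clocks R N -> \bar R) (x : clocks R N) : (forall e, (0 <= F e)%E) -> (forall e, (F e <= 1)%E) ->
  iint rate l F x = (fine (iint rate l F x))%:E.
Proof.
move=> F0 F1; rewrite fineK // ge0_fin_numE; last exact: iint_ge0.
exact: le_lt_trans (iint_le1 _ _ F0 F1) (ltry 1).
Qed.

Lemma int_pdf_cst (C : \bar R) : (0 <= C)%E -> (C <= 1)%E ->
  (\int[mu]_y ((pdf y)%:E * C) = C)%E.
Proof.
move=> C0 C1.
have -> : C = (fine C)%:E.
  by rewrite fineK // ge0_fin_numE // (le_lt_trans C1 (ltry 1)).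
under eq_integral do rewrite muleC.
rewrite integralZl_nm //; last by move=> y; rewrite lee_fin exponential_pdf_ge0 // ltW.
  by rewrite integral_exponential_pdf // mule1.
by rewrite -lee_fin fineK // ge0_fin_numE // (le_lt_trans C1 (ltry 1)).
Qed.

Variables (Phi : (P -> bool) -> bool) (B : clocks R N -> bool).
Hypothesis HPhi : forall th p b, ~~ internal p -> Phi (setb th p b) = Phi th.
Hypothesis HB : forall e p y, internal p -> B (upd e p y) = B e.

Lemma fact (l : seq P) (x : clocks R N) :
  iint rate l (fun e => ((Phi (thr e) && B e)%:R)%:E) x =
  ((Wt l Phi (thr x))%:E * iint rate l (fun e => ((B e)%:R)%:E) x)%E.
Proof.
have Bf0 e : (0 <= ((B e)%:R)%:E :> \bar R)%E by rewrite lee_fin; case: (B e).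
have Bf1 e : (((B e)%:R)%:E <= 1 :> \bar R)%E by rewrite lee_fin; case: (B e).
have pdf0 y : (0 <= (pdf y)%:E)%E by rewrite lee_fin exponential_pdf_ge0 // ltW.
elim: l x => [|p l IH] x /=.
  by rewrite -EFinM; case: (Phi _); case: (B x); rewrite /= ?mul1r ?mul0r.
set W1 := Wt l Phi (setb (thr x) p true).
set W0 := Wt l Phi (setb (thr x) p false).
have [ip|nip] := boolP (internal p).
- pose C := iint rate l (fun e => ((B e)%:R)%:E) x.
  have C0 : (0 <= C)%E by exact: iint_ge0.
  have C1 : (C <= 1)%E by exact: iint_le1.
  have HC y : iint rate l (fun e => ((B e)%:R)%:E) (upd x p y) = C.
    by apply: iint_upd => e z; rewrite HB.
  have -> : (\int[mu]_y ((pdf y)%:E * iint rate l (fun e => ((B e)%:R)%:E) (upd x p y)) = C)%E.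
    by rewrite -[RHS](int_pdf_cst C0 C1); apply: eq_integral => y _; rewrite HC.
  have CE : C = (fine C)%:E by rewrite fineK // ge0_fin_numE // (le_lt_trans C1 (ltry 1)).
  transitivity (\int[mu]_y ((fine C)%:E * ((pdf y)%:E * (if y <= t then W1 else W0)%:E)))%E.
    apply: eq_integral => y _; rewrite IH HC thr_upd -CE muleA muleC; congr (_ * _)%E.
    by case: (y <= t).
  rewrite integralZl_nm; [ | by rewrite -lee_fin -CE |
    by move=> y; apply: mule_ge0 => //; rewrite lee_fin; case: (y <= t); exact: Wt_ge0].
  by rewrite one_step // ?Wt_ge0 // -CE muleC.
- have HW y : Wt l Phi (thr (upd x p y)) = Wt l Phi (thr x).
    by rewrite thr_upd Wt_setb // => th' b'; rewrite HPhi.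
  transitivity (\int[mu]_y ((Wt l Phi (thr x))%:E * ((pdf y)%:E * iint rate l (fun e => ((B e)%:R)%:E) (upd x p y))))%E.
    apply: eq_integral => y _; rewrite IH HW.
    by rewrite muleA [X in (X * _)%E]muleC -muleA.
  rewrite integralZl_nm; [ | exact: Wt_ge0 |
    by move=> y; apply: mule_ge0 => //; exact: iint_ge0].
  congr (_ * _)%E; congr EFin.
  have HP' : forall th' b', Phi (setb th' p b') = Phi th' by move=> th' b'; rewrite HPhi.
  rewrite /W1 /W0 (@Wt_setb l Phi p (thr x) true HP') (@Wt_setb l Phi p (thr x) false HP').
  by rewrite -mulrDl addrC subrK mul1r.
Qed.

End Fact.

End m3.

Module m4.
Set SsrOldRewriteGoalsOrder.
Set Implicit Arguments. Unset Strict Implicit. Unset Printing Implicit Defensive.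
Local Open Scope classical_set_scope.
Local Open Scope ring_scope.
Import m1 m2 m3.
Import mathcomp.boot.seq mathcomp.boot.fintype mathcomp.boot.finset.
Import Pilot.Defs.

Lemma sum_split (T : finType) (R : nzRingType) (e : T) (U : {set T}) (F : {set T} -> R) :
  e \notin U ->
  \sum_(H : {set T} | H \subset e |: U) F H =
  \sum_(H : {set T} | H \subset U) F (e |: H) + \sum_(H : {set T} | H \subset U) F H.
Proof.
move=> eU; rewrite (bigID (fun H : {set T} => e \in H)) /=; congr (_ + _).
  rewrite (reindex_onto (fun H => e |: H) (fun H => H :\ e)) /=; last first.
    by move=> H /andP[_ eH]; rewrite setD1K.
  apply: eq_bigl => H; rewrite setU11 andbT.
  apply/idP/idP.
    move=> /andP[sH /eqP HD]; rewrite -HD; apply/subsetP => x; rewrite !inE => /andP[xe xH].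
    have := subsetP sH x; rewrite !inE xH => /(_ isT) /orP[/eqP xe'|//].
    by rewrite xe' eqxx in xe.
  move=> HU; have eH : e \notin H by apply: contra eU => /(subsetP HU).
  rewrite setU1K // eqxx andbT; apply/subsetP => x; rewrite !inE.
  by case/orP => [->//|/(subsetP HU) ->]; rewrite orbT.
apply: eq_bigl => H; apply/idP/idP.
  move=> /andP[sH eH]; apply/subsetP => x xH.
  move/subsetP: sH => /(_ x xH); rewrite !inE; case/orP => // /eqP xe.
  by move: eH; rewrite -xe xH.
move=> HU; have eH : e \notin H by apply: contra eU => /(subsetP HU).
rewrite eH andbT; apply/subsetP => x xH; rewrite !inE (subsetP HU x xH).
by rewrite orbT.
Qed.


Section Comb.
Context (R : realType) (N : nat) (rate t : R) (S : {set 'I_N}).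
Local Notation q := (1 - expR (- (t * rate))).
Local Notation P := ('I_N * 'I_N)%type.
Local Notation internal := (internal S).
Local Notation Wt := (Wt rate t).

Definition edge (p : P) : {set 'I_N} := [set p.1; p.2].

Definition Pset (th : P -> bool) : {set {set 'I_N}} :=
  [set E : {set 'I_N} | [exists i : 'I_N, exists j : 'I_N,
     [&& (i < j)%N, E == [set i; j], i \in S, j \in S & th (i, j)]]].

Lemma PsetP (th : P -> bool) E : reflect (exists p : P, [/\ (p.1 < p.2)%N, internal p, th p & E = edge p])
  (E \in Pset th).
Proof.
apply: (iffP idP).
  rewrite inE => /existsP[i /existsP[j /and5P[ij /eqP-> iS jS thij]]].
  by exists (i, j); split => //; rewrite /m3.internal /= iS jS.
case=> [[i j] [/= ij /andP[/= iS jS] thij ->]]; rewrite inE.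
by apply/existsP; exists i; apply/existsP; exists j; rewrite ij eqxx iS jS thij.
Qed.

Lemma edge_inj (p r : P) : (p.1 < p.2)%N -> (r.1 < r.2)%N -> edge p = edge r -> p = r.
Proof.
case: p r => [a b] [c d] /= ab cd E.
have : c \in [set a; b] by rewrite /edge /= in E; rewrite E !inE eqxx.
have : d \in [set a; b] by rewrite /edge /= in E; rewrite E !inE eqxx orbT.
have : a \in [set c; d] by rewrite /edge /= in E; rewrite -E !inE eqxx.
rewrite !inE => /orP[/eqP ac|/eqP ad] /orP[/eqP da|/eqP db] /orP[/eqP ca|/eqP cb];
  subst; try by []; try (by move: ab cd; lia).
Qed.

Lemma setb_ne (th : P -> bool) (p : P) b (r : P) : r != p -> setb th p b r = th r.
Proof. by rewrite /setb; case: (r == p). Qed.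

Lemma setb_eq (th : P -> bool) (p : P) b : setb th p b p = b.
Proof. by rewrite /setb eqxx. Qed.

Lemma Pset_nonint (th : P -> bool) (p : P) b : ~~ internal p -> Pset (setb th p b) = Pset th.
Proof.
move=> nip; apply/setP => E; apply/PsetP/PsetP; case=> r [r12 ir thr Er];
  exists r; (split => //); have rp : r != p by apply: contraNneq nip => <-.
  by rewrite setb_ne in thr.
by rewrite setb_ne.
Qed.

Lemma Pset_T (th : P -> bool) (p : P) : (p.1 < p.2)%N -> internal p ->
  Pset (setb th p true) = edge p |: Pset th.
Proof.
move=> p12 ip; apply/setP => E; rewrite in_setU1; apply/PsetP/idP.
  case=> r [r12 ir thr ->]; have [->|rp] := eqVneq r p; first by rewrite eqxx.
  by apply/orP; right; apply/PsetP; exists r; split => //; rewrite setb_ne in thr.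
case/orP => [/eqP ->|/PsetP[r [r12 ir thr ->]]].
  by exists p; split => //; rewrite setb_eq.
exists r; split => //; have [->|rp] := eqVneq r p; first by rewrite setb_eq.
by rewrite setb_ne.
Qed.

Lemma Pset_F (th : P -> bool) (p : P) : (p.1 < p.2)%N -> internal p ->
  Pset (setb th p false) = Pset th :\ edge p.
Proof.
move=> p12 ip; apply/setP => E; rewrite in_setD1; apply/PsetP/idP.
  case=> r [r12 ir thr ->]; have [rp|rp] := eqVneq r p; first by rewrite rp setb_eq in thr.
  rewrite setb_ne // in thr; apply/andP; split; last by apply/PsetP; exists r.
  by apply/eqP => /(edge_inj r12 p12) /eqP; rewrite (negbTE rp).
case/andP => Ep /PsetP[r [r12 ir thr Er]]; exists r; split => //.
have [rp|rp] := eqVneq r p; last by rewrite setb_ne.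
by move: Ep; rewrite Er rp eqxx.
Qed.

Lemma Wt_drop (l : seq P) (Phi : (P -> bool) -> bool) (th : P -> bool) :
  (forall th' p b, ~~ internal p -> Phi (setb th' p b) = Phi th') ->
  Wt l Phi th = Wt (filter internal l) Phi th.
Proof.
move=> HP; elim: l th => [|p l IH] th //=.
case: ifP => ip /=; first by rewrite !IH.
have HP' : forall th' b', Phi (setb th' p b') = Phi th' by move=> th' b'; rewrite HP ?ip.
rewrite (@Wt_setb _ _ rate t l Phi p th true HP') (@Wt_setb _ _ rate t l Phi p th false HP').
by rewrite -mulrDl addrC subrK mul1r IH.
Qed.

Definition EL (l : seq P) : {set {set 'I_N}} := [set edge p | p in l].

Lemma EL_cons p l : EL (p :: l) = edge p |: EL l.
Proof.
apply/setP => E; rewrite in_setU1; apply/imsetP/idP.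
  case=> r; rewrite inE => /orP[/eqP->|rl] ->; first by rewrite eqxx.
  by apply/orP; right; apply/imsetP; exists r.
case/orP => [/eqP->|/imsetP[r rl ->]]; first by exists p; rewrite // inE eqxx.
by exists r; rewrite // inE rl orbT.
Qed.

Lemma EL_nil : EL [::] = set0.
Proof. by apply/setP => E; rewrite in_set0; apply/negP => /imsetP[r]. Qed.

Local Notation w n h := (q ^+ h * (1 - q) ^+ (n - h)).

Lemma Wt_sum (l : seq P) (A : {set {set 'I_N}} -> bool) (th : P -> bool) :
  uniq l -> all (fun p : P => (p.1 < p.2)%N && internal p) l ->
  Wt l (fun th => A (Pset th)) th =
  \sum_(H : {set {set 'I_N}} | H \subset EL l)
     w #|EL l| #|H| * (A ((Pset th :\: EL l) :|: H))%:R.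
Proof.
elim: l th => [|p l IH] th.
  move=> _ _ /=; rewrite EL_nil (big_pred1 set0); last by move=> H; rewrite subset0.
  by rewrite cards0 expr0 mul1r subnn expr0 mul1r setD0 setU0.
rewrite /= => /andP[pl ul] /andP[/andP[p12 ip] al].
rewrite !IH // EL_cons.
have eEL : edge p \notin EL l.
  apply/imsetP => -[r rl] /(edge_inj p12).
  have /andP[r12 _] := allP al r rl => /(_ r12) pr.
  by move: pl; rewrite pr rl.
rewrite sum_split // cardsU1 eEL /= add1n.
rewrite !mulr_sumr; congr (_ + _); apply: eq_bigr => H HU.
  have eH : edge p \notin H by apply: contra eEL => /(subsetP HU).
  rewrite cardsU1 eH /= add1n subSS exprS mulrA -!mulrA; congr (_ * (_ * _)).
  rewrite Pset_T // [X in A X](_ : _ = Pset th :\: (edge p |: EL l) :|: (edge p |: H)) //.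
  apply/setP => E; rewrite !(in_setU, in_setD, in_setU1, in_setD1, in_set1).
  have [->|Ee] := eqVneq E (edge p); first by rewrite eEL orbT.
  by case: (E \in EL l); case: (E \in Pset th); case: (E \in H).
rewrite subSn ?subset_leq_card // exprS [in RHS]mulrCA -[in RHS]mulrA.
congr (_ * (_ * _)).
rewrite Pset_F // [X in A X](_ : _ = Pset th :\: (edge p |: EL l) :|: H) //.
apply/setP => E; rewrite !(in_setU, in_setD, in_setU1, in_setD1, in_set1).
by case: (E == edge p); case: (E \in Pset th); case: (E \in EL l); case: (E \in H).
Qed.

Lemma mem_pairs (p : P) : (p \in pairs N) = (p.1 < p.2)%N.
Proof.
rewrite mem_filter; case: ltnP => //= _; case: p => a b.
by apply: allpairs_f; rewrite mem_enum.
Qed.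

Lemma uniq_pairs : uniq (pairs N).
Proof.
apply: filter_uniq; apply: allpairs_uniq; rewrite ?enum_uniq //.
by move=> [a b] [c d] _ _.
Qed.

Definition ES : {set {set 'I_N}} := [set E : {set 'I_N} | E \subset S & #|E| == 2].

Lemma EL_pairs : EL (filter internal (pairs N)) = ES.
Proof.
apply/setP => E; rewrite inE; apply/imsetP/idP.
  case=> p; rewrite mem_filter mem_pairs => /andP[/andP[p1 p2] p12] ->.
  have pn : p.1 != p.2 by apply/eqP => h; move: p12; rewrite h ltnn.
  rewrite /edge cards2 pn; apply/andP; split => //.
  by apply/subsetP => x; rewrite !inE => /orP[] /eqP->.
case/andP => ES2 /cards2P[x [y [xy Exy]]].
have xS : x \in S by apply: (subsetP ES2); rewrite Exy !inE eqxx.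
have yS : y \in S by apply: (subsetP ES2); rewrite Exy !inE eqxx orbT.
case: (ltngtP x y) => [lxy|lyx|exy].
- exists (x, y); last by [].
  by rewrite mem_filter mem_pairs /m3.internal /= xS yS.
- exists (y, x); last by rewrite Exy /edge /= setUC.
  by rewrite mem_filter mem_pairs /m3.internal /= xS yS.
- by move: xy; rewrite (val_inj exy) eqxx.
Qed.

Lemma Pset_sub (th : P -> bool) : Pset th :\: EL (filter internal (pairs N)) = set0.
Proof.
apply/setP => E; rewrite in_setD in_set0; apply/negP => /andP[/negP nE /PsetP[p [p12 ip _ Ep]]].
by apply: nE; rewrite Ep; apply/imsetP; exists p; rewrite // mem_filter ip mem_pairs.
Qed.

Lemma ER_Wt (A : {set {set 'I_N}} -> bool) (th : P -> bool) :
  ER S q A = Wt (pairs N) (fun th => A (Pset th)) th.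
Proof.
rewrite Wt_drop; last by move=> th' p b nip; rewrite Pset_nonint.
rewrite Wt_sum; last 2 first.
- exact: filter_uniq uniq_pairs.
- by apply/allP => p; rewrite mem_filter mem_pairs => /andP[-> ->].
rewrite Pset_sub EL_pairs /ER big_mkcondr /=.
have cES : #|ES| = 'C(#|S|, 2) by rewrite cards_draws.
apply: eq_big => H.
  apply/forall_inP/subsetP => [h E EH|h E EH].
    by rewrite inE; have /andP[-> ->] := h E EH.
  by have := h E EH; rewrite inE => /andP[-> ->].
move=> _; rewrite set0U cES.
by case: (A H); rewrite ?mulr1 ?mulr0.
Qed.

End Comb.

End m4.

Module m5.
Set SsrOldRewriteGoalsOrder.
Set Implicit Arguments. Unset Strict Implicit. Unset Printing Implicit Defensive.
Local Open Scope classical_set_scope.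
Local Open Scope ring_scope.
Import m1 m2 m3 m4.
Import mathcomp.boot.seq mathcomp.boot.fintype mathcomp.boot.finset.
Import Pilot.Defs.

Lemma connect_restr (T : finType) (e e' : rel T) (Pr : pred T) :
  (forall u v, Pr u -> e u v -> e' u v && Pr v) ->
  forall x y, Pr x -> connect e x y -> connect e' x y && Pr y.
Proof.
move=> H x y Px /connectP[s].
elim: s x Px => [|z s IH] x Px /=; first by move=> _ ->; rewrite connect0.
case/andP => exz pzs ylast.
have /andP[e'xz Pz] := H x z Px exz.
have /andP[czy Py] := IH z Pz pzs ylast.
by rewrite Py andbT (connect_trans (connect1 e'xz) czy).
Qed.

Section Proc.
Context (R : realType) (N : nat) (a t : R) (S : {set 'I_N}).
Local Notation P := ('I_N * 'I_N)%type.
Local Notation internal := (internal S).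
Local Notation graph := {set {set 'I_N}}.

Definition small (G : graph) (x : 'I_N) := (#|cluster G x|%:R < a).
Definition Sc_edges (G : graph) := [forall E in G, E \subset ~: S].
Definition S_edges (G : graph) := [forall E in G, E \subset S].
Definition has_cross (G : graph) :=
  [exists i : 'I_N, exists j : 'I_N, [&& i \in S, j \notin S & [set i; j] \in G]].

Lemma adj_sym (G : graph) : symmetric (adj G).
Proof. by move=> x y; rewrite /adj setUC. Qed.

Lemma cluster_mem (G : graph) x : x \in cluster G x.
Proof. by rewrite inE connect0. Qed.

Lemma cluster_sub (G G' : graph) x : G \subset G' -> cluster G x \subset cluster G' x.
Proof.
move=> GG; apply/subsetP => y; rewrite !inE; apply: connect_sub => u v uv.
by apply: connect1; rewrite /adj (subsetP GG).
Qed.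

Lemma small_mono (G G' : graph) x : G \subset G' -> small G' x -> small G x.
Proof.
move=> GG; rewrite /small; apply: le_lt_trans.
by rewrite ler_nat subset_leq_card // cluster_sub.
Qed.

Lemma cluster_eq (G : graph) x y : y \in cluster G x -> cluster G y = cluster G x.
Proof.
rewrite inE => cxy; apply/setP => z; rewrite !inE; apply/idP/idP => h.
  exact: connect_trans cxy h.
have cyx : connect (adj G) y x by rewrite (sym_connect_sym (@adj_sym G)).
exact: connect_trans cyx h.
Qed.

Lemma cluster_decS (L' Q : graph) x : Sc_edges L' -> S_edges Q -> x \in S ->
  cluster (L' :|: Q) x = cluster Q x.
Proof.
move=> /forall_inP HL /forall_inP HQ xS; apply/eqP; rewrite eqEsubset; apply/andP; split;
  last by apply: cluster_sub; rewrite subsetUr.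
apply/subsetP => y; rewrite !inE => cxy.
suff h : forall u v, u \in S -> adj (L' :|: Q) u v -> adj Q u v && (v \in S).
  by case/andP: (@connect_restr _ _ _ (fun u => u \in S) h x y xS cxy).
move=> u v uS; rewrite /adj in_setU => /orP[uvL|uvQ].
  by have := subsetP (HL _ uvL) u; rewrite !inE eqxx uS => /(_ isT).
by rewrite uvQ /=; apply: (subsetP (HQ _ uvQ)); rewrite !inE eqxx orbT.
Qed.

Lemma cluster_decSc (L' Q : graph) x : Sc_edges L' -> S_edges Q -> x \notin S ->
  cluster (L' :|: Q) x = cluster L' x.
Proof.
move=> /forall_inP HL /forall_inP HQ xS; apply/eqP; rewrite eqEsubset; apply/andP; split;
  last by apply: cluster_sub; rewrite subsetUl.
apply/subsetP => y; rewrite !inE => cxy.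
suff h : forall u v, u \notin S -> adj (L' :|: Q) u v -> adj L' u v && (v \notin S).
  by case/andP: (@connect_restr _ _ _ (fun u => u \notin S) h x y xS cxy).
move=> u v uS; rewrite /adj in_setU => /orP[uvL|uvQ].
  rewrite uvL /=; have := subsetP (HL _ uvL) v; rewrite !inE eqxx orbT.
  by move=> /(_ isT).
by have := subsetP (HQ _ uvQ) u; rewrite !inE eqxx => /(_ isT) uS'; rewrite uS' in uS.
Qed.

Lemma card_cluster_single (L' : graph) x : Sc_edges L' -> x \in S -> #|cluster L' x| = 1%N.
Proof.
move=> HL xS.
have S0 : S_edges set0 by apply/forall_inP => E; rewrite in_set0.
have := cluster_decS HL S0 xS; rewrite setU0 => ->.
apply/eqP; rewrite eqn_leq; apply/andP; split; last first.
  by rewrite card_gt0; apply/set0Pn; exists x; exact: cluster_mem.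
rewrite -(cards1 x) subset_leq_card //; apply/subsetP => y; rewrite !inE => cxy.
suff h : forall u v, u == x -> adj set0 u v -> adj set0 u v && (v == x).
  by case/andP: (@connect_restr _ _ _ (pred1 x) h x y (eqxx x) cxy).
by move=> u v _; rewrite /adj in_set0.
Qed.

Lemma step_sub (G : graph) p : G \subset step a G p.
Proof. by rewrite /step; case: ifP => _; [exact: subsetUr|exact: subxx]. Qed.

Lemma foldl_mono (r : seq P) (G : graph) : G \subset foldl (step a) G r.
Proof.
elim: r G => [|p r IH] G /=; first exact: subxx.
exact: subset_trans (step_sub G p) (IH _).
Qed.

Lemma added (r : seq P) (G : graph) (p : P) : p \in r ->
  small (foldl (step a) G r) p.1 -> small (foldl (step a) G r) p.2 ->
  [set p.1; p.2] \in foldl (step a) G r.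
Proof.
elim: r G => [|s r IH] G //=; rewrite inE => /orP[/eqP->|pr] h1 h2; last exact: IH.
have sub : G \subset foldl (step a) (step a G s) r.
  exact: subset_trans (step_sub G s) (foldl_mono _ _).
have Hs : [set s.1; s.2] \in step a G s.
  rewrite /step; move: (small_mono sub h1) (small_mono sub h2); rewrite /small => -> ->.
  by rewrite setU11.
exact: (subsetP (foldl_mono r (step a G s))).
Qed.

Lemma hc_mono (G G' : graph) : G \subset G' -> has_cross G -> has_cross G'.
Proof.
move=> GG /existsP[i /existsP[j /and3P[iS jS ij]]].
by apply/existsP; exists i; apply/existsP; exists j; rewrite iS jS (subsetP GG).
Qed.

Lemma hc_edge (G : graph) i j : i \in S -> j \notin S -> has_cross ([set i; j] |: G).
Proof.
move=> iS jS; apply/existsP; exists i; apply/existsP; exists j.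
by rewrite iS jS setU11.
Qed.

End Proc.

End m5.

Module m6.
Set SsrOldRewriteGoalsOrder.
Set Implicit Arguments. Unset Strict Implicit. Unset Printing Implicit Defensive.
Local Open Scope classical_set_scope.
Local Open Scope ring_scope.
Import m1 m2 m3 m4 m5.
Import mathcomp.boot.seq mathcomp.boot.fintype mathcomp.boot.finset.
Import Pilot.Defs.

Section Sim.
Context (R : realType) (N : nat) (a t : R) (S : {set 'I_N}).
Local Notation P := ('I_N * 'I_N)%type.
Local Notation internal := (internal S).
Local Notation graph := {set {set 'I_N}}.
Local Notation small := (small a).
Local Notation Sc_edges := (Sc_edges S).
Local Notation S_edges := (S_edges S).
Local Notation has_cross := (has_cross S).

Variable K : graph.
Hypothesis HK : forall x, x \in S -> small K x.

Lemma one_lt_a x : x \in S -> 1%:R < a.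
Proof.
move=> xS; apply: le_lt_trans (HK xS); rewrite ler_nat card_gt0.
by apply/set0Pn; exists x; exact: cluster_mem.
Qed.

Lemma sim (r : seq P) : forall L L' Q, L = L' :|: Q -> Sc_edges L' -> S_edges Q -> Q \subset K ->
  (forall p, p \in r -> internal p -> [set p.1; p.2] \in K) ->
  (exists Q', [/\ foldl (step a) L r = foldl (step a) L' (filter (predC internal) r) :|: Q',
        Sc_edges (foldl (step a) L' (filter (predC internal) r)), S_edges Q' & Q' \subset K])
  \/ (has_cross (foldl (step a) L r) /\ has_cross (foldl (step a) L' (filter (predC internal) r))).
Proof.
elim: r => [|p r IH] L L' Q -> HL' HQ QK Hr /=.
  by left; exists Q.
have Hr' : forall p0, p0 \in r -> internal p0 -> [set p0.1; p0.2] \in K.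
  by move=> p0 p0r; apply: Hr; rewrite inE p0r orbT.
have smallQ : forall x, x \in S -> (#|cluster (L' :|: Q) x|%:R < a) = true.
  move=> x xS; rewrite (cluster_decS HL' HQ xS); exact: (small_mono QK (HK xS)).
have smallL' : forall x, x \in S -> (#|cluster L' x|%:R < a) = true.
  by move=> x xS; rewrite (card_cluster_single HL' xS); exact: one_lt_a xS.
have Pe (i j : 'I_N) : i \notin S -> j \notin S -> Sc_edges ([set i; j] |: L').
  move=> iS jS; apply/forall_inP => E; rewrite in_setU1 => /orP[/eqP->|EL].
    by apply/subsetP => z; rewrite !inE => /orP[] /eqP->; rewrite ?iS ?jS.
  by move/forall_inP: HL' => /(_ E EL).
case: (boolP (p.1 \in S)) => p1S; case: (boolP (p.2 \in S)) => p2S.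
- have ip : internal p by rewrite /m3.internal p1S p2S.
  rewrite ip /= /step (smallQ _ p1S) (smallQ _ p2S) /= setUCA.
  apply: IH => //.
  + apply/forall_inP => E; rewrite in_setU1 => /orP[/eqP->|EQ].
      by apply/subsetP => z; rewrite !inE => /orP[] /eqP->.
    by move/forall_inP: HQ => /(_ E EQ).
  + by rewrite subUset sub1set QK andbT; apply: Hr; rewrite ?inE ?eqxx.
- have ip : internal p = false by rewrite /m3.internal p1S (negbTE p2S).
  rewrite ip /= /step (smallQ _ p1S) (smallL' _ p1S) (cluster_decSc HL' HQ p2S) /=.
  case: ifP => _; last exact: IH.
  right; split.
    apply: hc_mono (foldl_mono a _ _) _; exact: hc_edge.
  apply: hc_mono (foldl_mono a _ _) _; exact: hc_edge.
- have ip : internal p = false by rewrite /m3.internal (negbTE p1S).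
  rewrite ip /= /step (smallQ _ p2S) (smallL' _ p2S) (cluster_decSc HL' HQ p1S) /= !andbT.
  case: ifP => _; last exact: IH.
  right; split.
    apply: hc_mono (foldl_mono a _ _) _; rewrite (setUC [set p.1]); exact: hc_edge.
  apply: hc_mono (foldl_mono a _ _) _; rewrite (setUC [set p.1]); exact: hc_edge.
- have ip : internal p = false by rewrite /m3.internal (negbTE p1S).
  rewrite ip /= /step (cluster_decSc HL' HQ p1S) (cluster_decSc HL' HQ p2S).
  case: ifP => _; last exact: IH.
  rewrite setUA; apply: IH => //; exact: Pe.
Qed.

End Sim.

End m6.

Module m7.
Set SsrOldRewriteGoalsOrder.
Set Implicit Arguments. Unset Strict Implicit. Unset Printing Implicit Defensive.
Local Open Scope classical_set_scope.
Local Open Scope ring_scope.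
Import m1 m2 m3 m4 m5 m6.
Import mathcomp.boot.seq mathcomp.boot.fintype mathcomp.boot.finset.
Import Pilot.Defs.

Lemma sort_eq_in (T : eqType) (le1 le2 : rel T) (s : seq T) :
  {in s &, le1 =2 le2} -> sort le1 s = sort le2 s.
Proof.
move=> H; have /all_sigP[s' Es] : all (mem s) s by apply/allP.
rewrite Es !sort_map; congr (map _ (sort _ s')).
apply/funext => x; apply/funext => y; exact: H (svalP x) (svalP y).
Qed.

Section Key.
Context (R : realType) (N : nat) (a t : R) (S : {set 'I_N}).
Local Notation P := ('I_N * 'I_N)%type.
Local Notation internal := (internal S).
Local Notation graph := {set {set 'I_N}}.
Local Notation small := (small a).
Local Notation Pset := (Pset S).

Definition kill (e : clocks R N) : clocks R N := fun q => if internal q then t + 1 else e q.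

Lemma rung_kill e : rung (kill e) t = filter (predC internal) (rung e t).
Proof.
rewrite /rung filter_sort; last 2 first.
- by move=> x y; exact: le_total.
- by move=> x y z; exact: le_trans.
have -> : filter (fun p => kill e p <= t) (pairs N) =
          filter (predC internal) (filter (fun p => e p <= t) (pairs N)).
  rewrite -filter_predI; apply: eq_filter => p /=; rewrite /kill.
  case: (internal p) => //=; apply/negbTE; rewrite -ltNge ltrDl ltr01 //.
apply: sort_eq_in => p q; rewrite !mem_filter /= /kill.
by move=> /andP[/negbTE -> _] /andP[/negbTE -> _].
Qed.

Lemma mem_rung e (p : P) : (p \in rung e t) = (p.1 < p.2)%N && (e p <= t).
Proof. by rewrite /rung mem_sort mem_filter mem_pairs andbC. Qed.

Lemma St_in (e : clocks R N) x : (x \in St a e t) = small (links a e t) x.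
Proof. by rewrite inE. Qed.

Lemma Sc0 : Sc_edges S set0.
Proof. by apply/forall_inP => E; rewrite in_set0. Qed.
Lemma S0 : S_edges S set0.
Proof. by apply/forall_inP => E; rewrite in_set0. Qed.

Lemma cross_contra (G : graph) : (forall x, (x \in S) = small G x) -> ~~ has_cross S G.
Proof.
move=> H; apply/negP => /existsP[i /existsP[j /and3P[iS jS ij]]].
have jc : j \in cluster G i by rewrite inE connect1.
move: jS; rewrite H /small (cluster_eq jc) -/(small G i) -H iS.
by [].
Qed.

Lemma key e : (St a e t == S) = no_big_comp a S (Pset (thr t e)) && (St a (kill e) t == S).
Proof.
have E0 : (set0 : graph) = set0 :|: set0 by rewrite setU0.
apply/idP/andP.
- move/eqP => HSt.
  have HK : forall x, x \in S -> small (links a e t) x by move=> x; rewrite -HSt St_in.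
  have Hint : forall p, p \in rung e t -> internal p -> [set p.1; p.2] \in links a e t.
    by move=> p pr /andP[p1 p2]; rewrite /links; apply: added => //; exact: HK.
  have := @sim R N a S (links a e t) HK (rung e t) set0 set0 set0 E0 Sc0 S0 (sub0set _) Hint.
  rewrite -rung_kill.
  case=> [[Q' [HLF HL'F HQ' QK]] | [hc _]]; last first.
    have HH : forall x, (x \in S) = small (links a e t) x by move=> x; rewrite -St_in HSt.
    by exfalso; apply: (negP (cross_contra HH)); exact: hc.
  split.
    apply/forall_inP => x xS; apply: (small_mono _ (HK x xS)).
    apply/subsetP => E /PsetP[p [p12 ip thp ->]]; apply: Hint => //.
    by rewrite mem_rung p12; exact: thp.
  apply/eqP/setP => x; rewrite St_in; case: (boolP (x \in S)) => xS.
    by apply: (small_mono _ (HK x xS)); rewrite /links HLF subsetUl.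
  have : x \notin St a e t by rewrite HSt.
  by rewrite St_in /small /links HLF (cluster_decSc HL'F HQ' xS) => /negbTE.
- case=> nbc /eqP HSk.
  have HK : forall x, x \in S -> small (Pset (thr t e)) x.
    by move=> x xS; move/forall_inP: nbc => /(_ x xS).
  have Hint : forall p, p \in rung e t -> internal p -> [set p.1; p.2] \in Pset (thr t e).
    by move=> p; rewrite mem_rung => /andP[p12 ept] ip; apply/PsetP; exists p; split.
  have := @sim R N a S _ HK (rung e t) set0 set0 set0 E0 Sc0 S0 (sub0set _) Hint.
  rewrite -rung_kill.
  case=> [[Q' [HLF HL'F HQ' QK]] | [_ hc]]; last first.
    have HH : forall x, (x \in S) = small (links a (kill e) t) x by move=> x; rewrite -St_in HSk.
    by exfalso; apply: (negP (cross_contra HH)); exact: hc.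
  apply/eqP/setP => x; rewrite St_in /links HLF; case: (boolP (x \in S)) => xS.
    by rewrite /small (cluster_decS HL'F HQ' xS); exact: small_mono QK (HK x xS).
  have : x \notin St a (kill e) t by rewrite HSk.
  by rewrite St_in /small (cluster_decSc HL'F HQ' xS) => /negbTE.
Qed.

Lemma Ct_St e : St a e t = S -> Ct a e t = Pset (thr t e).
Proof. by move=> H; rewrite /Ct H. Qed.

Lemma ev2 (G : graph) e : (St a e t == S) && (Ct a e t == G) =
  ((Pset (thr t e) == G) && no_big_comp a S (Pset (thr t e))) && (St a (kill e) t == S).
Proof.
case H: (St a e t == S); rewrite -andbA -key H /=.
  by rewrite Ct_St ?(eqP H) // andbT.
by rewrite andbF.
Qed.


End Key.

End m7.

Unset Implicit Arguments. Set Strict Implicit. Set Printing Implicit Defensive.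

Theorem lemma4p1 (R : realType) (alpha : nat -> R)
  (halpha_inf : alpha n @[n --> \oo] --> +oo)
  (halpha_o : (fun n => alpha n / n%:R) @ \oo --> 0)
  (N : nat) (hN : (2 <= N)%N) (t : R) (ht : 0 <= t)
  (S : {set 'I_N})
  (hS : (0 < Pr (fun e => St (alpha N) e t == S))%E)
  (G : {set {set 'I_N}}) (hG : graph_on S G) :
  fine (Pr (fun e => (St (alpha N) e t == S) && (Ct (alpha N) e t == G)))
    / fine (Pr (fun e => St (alpha N) e t == S))
  = ER S (pN N t) (fun H => (H == G) && no_big_comp (alpha N) S H)
    / ER S (pN N t) (no_big_comp (alpha N) S).
Proof.
set a := alpha N.
pose rate : R := N%:R^-1.
have rate_gt0 : 0 < rate by rewrite invr_gt0 ltr0n; apply: leq_trans hN.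
pose B := fun e : clocks R N => St a (m7.kill t S e) t == S.
pose Pn := fun th => no_big_comp a S (m4.Pset S th).
pose PG := fun th => (m4.Pset S th == G) && no_big_comp a S (m4.Pset S th).
have HB : forall e p y, m3.internal S p -> B (upd e p y) = B e.
  move=> e p y ip; rewrite /B; congr (St a _ t == S).
  apply/funext => r; rewrite /m7.kill /upd.
  by case: (eqVneq r p) => [->|]; rewrite ?ip.
have HPn : forall th p b, ~~ m3.internal S p -> Pn (m3.setb th p b) = Pn th.
  by move=> th p b nip; rewrite /Pn m4.Pset_nonint.
have HPG : forall th p b, ~~ m3.internal S p -> PG (m3.setb th p b) = PG th.
  by move=> th p b nip; rewrite /PG m4.Pset_nonint.
have E1 : Pr (fun e => St a e t == S) =
   ((m3.Wt rate t (pairs N) Pn (m3.thr t (fun _ => 0%R)))%:E *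
     iint rate (pairs N) (fun e => ((B e)%:R)%:E) (fun _ => 0%R))%E.
  rewrite -(m3.fact rate_gt0 ht HPn HB); rewrite /Pr; congr iint.
  by apply/funext => e; rewrite m7.key.
have E2 : Pr (fun e => (St a e t == S) && (Ct a e t == G)) =
   ((m3.Wt rate t (pairs N) PG (m3.thr t (fun _ => 0%R)))%:E *
     iint rate (pairs N) (fun e => ((B e)%:R)%:E) (fun _ => 0%R))%E.
  rewrite -(m3.fact rate_gt0 ht HPG HB); rewrite /Pr; congr iint.
  by apply/funext => e; rewrite m7.ev2.
rewrite E1 E2 in hS *.
have ERn := m4.ER_Wt rate t S (no_big_comp a S) (m3.thr t (fun _ => 0%R)).
have ERG := m4.ER_Wt rate t S (fun H => (H == G) && no_big_comp a S H) (m3.thr t (fun _ => 0%R)).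
rewrite /pN -/rate ERn ERG -/Pn -/PG.
set Wn := m3.Wt _ _ _ Pn _.
set WG := m3.Wt _ _ _ PG _.
set PB := iint _ _ _ _.
have PBE : PB = (fine PB)%:E.
  apply: m3.iint_fin => // e; rewrite lee_fin; case: (B e) => //.
have pb0 : fine PB != 0.
  by apply/eqP => h; move: hS; rewrite -/Wn -/PB PBE h mule0 ltxx.
rewrite PBE -!EFinM /=.
by rewrite invfM mulrACA divff // mulr1.
Qed.
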